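(* Let $n,m\ge1$, let $K_n$ be the ordered complete graph on $n$ vertices, and let $P_m$ be a path on $m$ vertices with an arbitrary total order on its vertices. Then $R_o(K_n,P_m)\le 2^{\lceil\log_2 n\rceil\cdot(\lceil\log_2 m\rceil+1)}$.
   Context: An ordered graph is a graph with a total order $\prec$ on its vertices. An ordered graph $F$ is contained in an ordered graph $H$ if there is an injective map $V(F)\to V(H)$ preserving both the vertex order and adjacency. The ordered Ramsey number $R_o(F,G)$ is the smallest $N$ such that every red/blue colouring of the edges of the ordered complete graph $K_N$ contains a blue copy of $F$ or a red copy of $G$. *)

(* Defs.v *)
From mathcomp Require Import all_boot all_fingroup.
Set Implicit Arguments. Unset Strict Implicit. Unset Printing Implicit Defensive.

(* An ordered graph on k vertices: vertex set 'I_k with its natural order,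
   adjacency given by a relation E (only pairs i < j are ever consulted). *)

(* A red/blue colouring of the edges of the ordered complete graph K_N:
   the colour of the edge {a,b} with a < b is c a b (true = blue, false = red). *)
Definition colouring (N : nat) := 'I_N -> 'I_N -> bool.

Definition has_mono_copy (k : nat) (E : rel 'I_k) (N : nat) (c : colouring N)
    (col : bool) : Prop :=
  exists f : 'I_k -> 'I_N,
    (forall i j : 'I_k, i < j -> f i < f j) /\
    (forall i j : 'I_k, i < j -> E i j -> c (f i) (f j) = col).

(* N has the Ramsey property for (F, G): every colouring of K_N contains a
   blue copy of F or a red copy of G. R_o(F,G) is the least such N. *)
Definition ordered_ramsey_prop (k : nat) (F : rel 'I_k) (l : nat) (G : rel 'I_l)
    (N : nat) : Prop :=
  forall c : colouring N, has_mono_copy F c true \/ has_mono_copy G c false.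

Definition complete_rel (n : nat) : rel 'I_n := fun i j => i != j.

(* Path on m vertices with an arbitrary vertex order: the vertices 'I_m
   (naturally ordered) are visited along the path in the order given by the
   position permutation p (vertex v is at position p v); v,w adjacent iff
   their positions are consecutive. *)
Definition path_rel (m : nat) (p : {perm 'I_m}) : rel 'I_m :=
  fun v w => ((p v).+1 == p w) || ((p w).+1 == p v).

(* Main.v *)
Require Import Defs.
From mathcomp Require Import all_boot all_fingroup.
From Stdlib Require Import Classical.
From mathcomp Require Import zify.

Set Implicit Arguments. Unset Strict Implicit. Unset Printing Implicit Defensive.

Definition blue (N : nat) (c : colouring N) (x y : 'I_N) : bool :=
  if x < y then c x y else c y x.

Lemma blueC N (c : colouring N) x y : x != y -> blue c x y = blue c y x.
Proof.
rewrite /blue => nxy; case: (ltngtP x y) => // H.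
by move/val_inj: H => H; rewrite H eqxx in nxy.
Qed.

Lemma split_card N (S : {set 'I_N}) K : K <= #|S| ->
  exists t : nat, #|S :&: [set x : 'I_N | x < t]| = K.
Proof.
pose f t := #|S :&: [set x : 'I_N | x < t]|.
have fS1 t : f t.+1 <= (f t).+1.
  case: (ltnP t N) => tN.
    have sub : S :&: [set x : 'I_N | x < t.+1] \subset
               Ordinal tN |: (S :&: [set x : 'I_N | x < t]).
      apply/subsetP => x; rewrite !inE => /andP [xS]; rewrite ltnS leq_eqVlt.
      case/orP => [/eqP E|->]; last by rewrite xS orbT.
      by apply/orP; left; apply/eqP; apply: val_inj.
    apply: leq_trans (subset_leq_card sub) _.
    by rewrite cardsU1; case: (_ \notin _).
  rewrite /f; suff -> : S :&: [set x : 'I_N | x < t.+1] = S :&: [set x : 'I_N | x < t] by [].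
  apply/setP => x; rewrite !inE.
  by rewrite (leq_trans (ltn_ord x) tN) (leq_trans (ltn_ord x) (leqW tN)).
have fN : f N = #|S|.
  by rewrite /f; apply: eq_card => x; rewrite !inE ltn_ord andbT.
have : forall t, K <= f t -> exists t', f t' = K.
  elim => [|t IH].
    rewrite /f => K0; exists 0; apply/eqP; rewrite eqn_leq K0 andbT.
    suff -> : S :&: [set x : 'I_N | x < 0] = set0 by rewrite cards0.
    by apply/setP => x; rewrite !inE ltn0 andbF.
  move=> Kt; case: (leqP K (f t)) => H; first exact: IH.
  exists t.+1; apply/eqP; rewrite eqn_leq Kt andbT.
  exact: leq_trans (fS1 t) H.
by move=> /(_ N); rewrite fN => H KS; case: (H KS) => t' Ht'; exists t'.
Qed.

Lemma chunks N K (j : nat) (S : {set 'I_N}) : j * K <= #|S| ->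
  exists A : nat -> {set 'I_N},
    (forall r, r < j -> A r \subset S /\ K <= #|A r|) /\
    (forall r r' (x y : 'I_N), r < r' -> r' < j -> x \in A r -> y \in A r' -> x < y).
Proof.
elim: j S => [|j IH] S hS.
  by exists (fun _ => set0); split => // r r' x y _; rewrite ltn0.
have KS : K <= #|S| by apply: leq_trans hS; rewrite mulSn leq_addr.
case: (split_card KS) => t Ht.
set B := [set x : 'I_N | x < t] in Ht.
have cS : j * K <= #|S :\: B|.
  by move: (cardsID B S) hS; rewrite Ht mulSn => <-; rewrite leq_add2l.
case: (IH _ cS) => A' [HA1 HA2].
exists (fun r => if r == 0 then S :&: B else A' r.-1); split.
  case=> [|r] /= Hr; first by rewrite subsetIl Ht.
  have [h1 h2] := HA1 r Hr; split => //.
  by apply: subset_trans h1 _; apply: subsetDl.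
case=> [|r] [|r'] x y //= Hrr' Hr'.
  move=> xin yin.
  have [h1 _] := HA1 r' Hr'.
  move: (subsetP h1 y yin); rewrite !inE => /andP [yB _].
  move: xin; rewrite !inE => /andP [_ xt].
  by rewrite -leqNgt in yB; apply: leq_trans xt yB.
by apply: HA2.
Qed.

Definition clique N (c : colouring N) (Q : {set 'I_N}) :=
  forall x y, x \in Q -> y \in Q -> x != y -> blue c x y.

Definition goodk N (c : colouring N) k L :=
  forall S : {set 'I_N}, L <= #|S| ->
    exists Q : {set 'I_N}, Q \subset S /\ k <= #|Q| /\ clique c Q.

Lemma goodk1 N (c : colouring N) : goodk c 1 1.
Proof.
move=> S /card_gt0P [x xS]; exists [set x]; split; first by rewrite sub1set.
by rewrite cards1; split => // y z; rewrite !inE => /eqP -> /eqP ->; rewrite eqxx.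
Qed.

Lemma step (m' : nat) (p : {perm 'I_m'.+1}) N (c : colouring N) k L :
  0 < L -> ~ has_mono_copy (path_rel p) c false -> goodk c k L ->
  goodk c (2 * k) (m'.+1 * (2 * L)).
Proof.
move=> L0 noP gk S hS; apply: NNPP => noQ; apply: noP.
case: (chunks hS) => A [HA1 HA2].
pose q (j : nat) : 'I_m'.+1 := (p^-1)%g (inord j).
pose Av j := A (val (q j)).
have Avsub j : Av j \subset S by case: (HA1 _ (ltn_ord (q j))).
have Avcard j : 2 * L <= #|Av j| by case: (HA1 _ (ltn_ord (q j))).
have qinj j j' : j <= m' -> j' <= m' -> q j = q j' -> j = j'.
  move=> hj hj' /perm_inj E.
  by rewrite -(@inordK m' j) // -(@inordK m' j') // E.
have Avdisj j j' x y : j <= m' -> j' <= m' -> j != j' -> x \in Av j -> y \in Av j' -> x != y.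
  move=> hj hj' njj xin yin; apply/eqP => Exy.
  have nq : val (q j) != val (q j').
    by apply/eqP => /val_inj /(qinj _ _ hj hj') E; rewrite E eqxx in njj.
  case: (ltngtP (q j) (q j')) nq => // H _.
    by move: (HA2 _ _ _ _ H (ltn_ord _) xin yin); rewrite Exy ltnn.
  by move: (HA2 _ _ _ _ H (ltn_ord _) yin xin); rewrite Exy ltnn.
have T : forall d, d <= m' -> exists B : {set 'I_N},
    B \subset Av (m' - d) /\ L <= #|B| /\
    forall x, x \in B -> exists g : nat -> 'I_N, g (m' - d) = x /\
      (forall j, m' - d <= j -> j <= m' -> g j \in Av j) /\
      (forall j, m' - d <= j -> j < m' -> ~~ blue c (g j) (g j.+1)).
  elim=> [|d IH] hd.
    exists (Av (m' - 0)); split => //; split.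
      by apply: leq_trans (Avcard _); rewrite mulSn leq_addr.
    move=> x xin; exists (fun _ => x); split => //; split.
      by move=> j; rewrite subn0 in xin * => h1 h2; have -> : j = m' by apply/eqP; rewrite eqn_leq h1 h2.
    by move=> j; rewrite subn0 => h1 h2; move: (leq_trans h2 h1); rewrite ltnn.
  have [B' [B'sub [B'card B'g]]] := IH (ltnW hd).
  have ei : (m' - d.+1).+1 = m' - d by rewrite subnSK.
  have [Q [QB' [Qk Qcl]]] := gk _ B'card.
  pose C := [set x in Av (m' - d.+1) | [forall y in Q, blue c x y]].
  case: (leqP L #|C|) => HC.
    have [Q' [Q'C [Q'k Q'cl]]] := gk _ HC.
    exfalso; apply: noQ; exists (Q :|: Q'); split.
      rewrite subUset; apply/andP; split.
        exact: subset_trans QB' (subset_trans B'sub (Avsub _)).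
      apply: subset_trans Q'C _; apply: subset_trans (Avsub (m' - d.+1)).
      by apply/subsetP => z; rewrite inE => /andP [].
    have dsj : Q :&: Q' = set0.
      apply/setP => z; rewrite !inE; apply/negbTE/negP => /andP [zQ zQ'].
      have zA : z \in Av (m' - d) := subsetP B'sub _ (subsetP QB' _ zQ).
      have zA' : z \in Av (m' - d.+1).
        by move: (subsetP Q'C _ zQ'); rewrite inE => /andP [].
      have : z != z.
        apply: (Avdisj (m' - d) (m' - d.+1)) => //; try exact: leq_subr.
        by rewrite -ei; apply/eqP => /esym /n_Sn.
      by rewrite eqxx.
    split.
      by rewrite cardsU dsj cards0 subn0 mul2n -addnn leq_add.
    move=> x y; rewrite !inE => /orP [xQ|xQ'] /orP [yQ|yQ'] nxy.
    - exact: Qcl.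
    - rewrite blueC //; move: (subsetP Q'C _ yQ'); rewrite inE => /andP [_ /forall_inP].
      by apply.
    - move: (subsetP Q'C _ xQ'); rewrite inE => /andP [_ /forall_inP].
      by apply.
    - exact: Q'cl.
  exists (Av (m' - d.+1) :\: C); split; first exact: subsetDl.
  split.
    move: (cardsID C (Av (m' - d.+1))) (Avcard (m' - d.+1)) => E.
    have: #|Av (m' - d.+1) :&: C| <= #|C| by apply: subset_leq_card; apply: subsetIr.
    move: HC; rewrite -E mul2n -addnn; lia.
  move=> x; rewrite !inE => /andP [xC xA].
  have : ~~ [forall y in Q, blue c x y] by move: xC; rewrite xA.
  rewrite negb_forall_in => /existsP [y /andP [yQ nb]].
  have [g' [g'y [g'A g'r]]] := B'g y (subsetP QB' _ yQ).
  exists (fun j => if j == m' - d.+1 then x else g' j); split; first by rewrite eqxx.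
  split.
    move=> j h1 h2; case: eqP => [->|ne] //.
    apply: g'A => //; rewrite -ei; rewrite leq_eqVlt in h1.
    by case/orP: h1 => // /eqP E; case: ne.
  move=> j h1 h2; case: eqP => [->|ne].
    by rewrite gtn_eqF // ei g'y.
  have h1' : m' - d <= j.
    by rewrite -ei; rewrite leq_eqVlt in h1; case/orP: h1 => // /eqP E; case: ne.
  have -> : (j.+1 == m' - d.+1) = false.
    by rewrite gtn_eqF // ltnS.
  exact: g'r.
have [B [_ [BL Bg]]] := T m' (leqnn _).
have /card_gt0P [x xB] : 0 < #|B| by apply: leq_trans BL.
have [g [_ [gA gr]]] := Bg x xB.
rewrite subnn in gA gr.
have qp v : q (p v) = v by rewrite /q inord_val permK.
have fA v : g (p v) \in A (val v).
  by move: (gA (p v) (leq0n _) (ltn_ord (p v))); rewrite /Av qp.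
have finc (v w : 'I_m'.+1) : v < w -> g (p v) < g (p w).
  by move=> vw; apply: (HA2 _ _ _ _ vw (ltn_ord w)).
exists (fun v => g (p v)); split => // v w vw.
rewrite /path_rel => /orP [/eqP E|/eqP E].
  have h : p v < m' by rewrite -ltnS E ltn_ord.
  have := gr (p v) (leq0n _) h; rewrite E.
  by rewrite /blue (finc _ _ vw) => /negbTE.
have h : p w < m' by rewrite -ltnS E ltn_ord.
have := gr (p w) (leq0n _) h; rewrite E.
rewrite blueC; last by rewrite neq_ltn (finc _ _ vw) orbT.
by rewrite /blue (finc _ _ vw) => /negbTE.
Qed.

Lemma iter (m' : nat) (p : {perm 'I_m'.+1}) N (c : colouring N) :
  ~ has_mono_copy (path_rel p) c false ->
  forall a, goodk c (2 ^ a) ((2 * m'.+1) ^ a).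
Proof.
move=> noP; elim=> [|a IH]; first exact: goodk1.
have -> : (2 * m'.+1) ^ a.+1 = m'.+1 * (2 * (2 * m'.+1) ^ a) by rewrite expnS; lia.
rewrite expnS; apply: step; [by rewrite expn_gt0 | exact: noP | exact: IH].
Qed.

Lemma pow_mono u v a : u <= v -> u ^ a <= v ^ a.
Proof. by move=> uv; elim: a => // a IH; rewrite !expnS leq_mul. Qed.

Theorem theoremt (n m : nat) (hn : 1 <= n) (hm : 1 <= m) (p : {perm 'I_m}) :
  exists N : nat,
    N <= 2 ^ (up_log 2 n * (up_log 2 m).+1) /\
    ordered_ramsey_prop (@complete_rel n) (@path_rel m p) N.
Proof.
case: m hm p => // m' _ p.
exists ((2 * m'.+1) ^ up_log 2 n); split.
  rewrite [up_log 2 n * _]mulnC expnM; apply: pow_mono; rewrite expnS leq_mul2l /=.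
  exact: up_logP.
move=> c; case: (classic (has_mono_copy (path_rel p) c false)) => [H|noP]; first by right.
left.
have hT : (2 * m'.+1) ^ up_log 2 n <= #|[set: 'I_((2 * m'.+1) ^ up_log 2 n)]|.
  by rewrite cardsT card_ord.
have [Q [_ [Qk Qcl]]] := iter noP hT.
have nQ : n * 1 <= #|Q| by rewrite muln1; apply: leq_trans (up_logP _ (isT : 1 < 2)) Qk.
have [A [HA1 HA2]] := chunks nQ.
have [x0 _] : exists x0, x0 \in Q.
  by apply/card_gt0P; apply: leq_trans nQ; rewrite muln1.
pose f (i : 'I_n) := odflt x0 [pick x in A (val i)].
have fA i : f i \in A (val i).
  rewrite /f; case: pickP => [x //|none].
  have [_ h] := HA1 _ (ltn_ord i); move: h => /card_gt0P [y yA].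
  by move: (none y); rewrite yA.
have finc (i j : 'I_n) : i < j -> f i < f j.
  by move=> ij; apply: (HA2 _ _ _ _ ij (ltn_ord j)); apply: fA.
exists f; split => // i j ij _.
have fQ k : f k \in Q by have [h _] := HA1 _ (ltn_ord k); exact: subsetP h _ (fA k).
have := Qcl _ _ (fQ i) (fQ j); rewrite /blue (finc _ _ ij); apply.
by rewrite neq_ltn (finc _ _ ij).
Qed.
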